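(* Consider the multicast coalitional game with player set $\mathcal{N}$ and value function $$v(S)=\sum_{i\in S}U_i-\sum_{i\in S}\frac{\alpha_i}{R_S}-\frac{\beta+\gamma}{R_S},\qquad R_S=\min_{i\in S}R_i,$$ for nonempty $S\subseteq\mathcal{N}$. Let $\mathbf{P}=\{P_1,\dots,P_n\}$ be a partition of $\mathcal{N}$ into nonempty sets, with $R_{j,min}$, $R_{j,max}$ the minimum and maximum rates of users in $P_j$. Let $\alpha_{min}=\min_{i\in\mathcal{N}}\alpha_i$, $\alpha_{max}=\max_{i\in\mathcal{N}}\alpha_i$. If $$\frac{R_{j,max}}{R_{j,min}}\le\frac{2(\alpha_{min}+\beta+\gamma)}{\alpha_{max}|P_j|+\beta+\gamma}\quad\forall j\in\{1,\dots,n\},$$ then for every $\mathbf{P}$-compatible collection $\mathbf{S}=\{S_1,\dots,S_k\}$ (mutually disjoint nonempty sets with $\bigcup_{i=1}^kS_i\subseteq P_j$ for some $j$), $$v\Big(\bigcup_{i=1}^kS_i\Big)\ge\sum_{i=1}^kv(S_i).$$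
   Context: A transmitter multicasts a file of size $X>0$ bits to users $\mathcal{N}=\{1,\dots,N\}$. User $i$ has valuation $U_i\in\mathbb{R}$, downloads at rate $R_i>0$, and consumes receive power $P_{Rx,i}>0$; the transmitter transmits at power $P_{Tx}>0$. Costs per unit energy are $a>0$ at users and $b>0$ at the transmitter; bandwidth cost per second is $w>0$. Set $\alpha_i=aP_{Rx,i}X$, $\beta=bP_{Tx}X$, $\gamma=wX$. *)

(* Defs.v *)
From mathcomp Require Import all_boot all_order all_algebra.
Set Implicit Arguments. Unset Strict Implicit. Unset Printing Implicit Defensive.
Import Order.TTheory GRing.Theory Num.Theory.
Local Open Scope ring_scope.

(* minimum / maximum of f over a finite set S (0 if S is empty; only used for
   nonempty S) *)
Definition setmin (R : realDomainType) (T : finType) (f : T -> R) (S : {set T}) : R :=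
  match [pick i in S] with
  | Some i0 => \big[Num.min/f i0]_(i in S) f i
  | None => 0
  end.

Definition setmax (R : realDomainType) (T : finType) (f : T -> R) (S : {set T}) : R :=
  match [pick i in S] with
  | Some i0 => \big[Num.max/f i0]_(i in S) f i
  | None => 0
  end.

Definition RS (R : realDomainType) (T : finType) (rate : T -> R) (S : {set T}) : R :=
  setmin rate S.

Definition mvalue (R : realFieldType) (T : finType) (U rate alpha : T -> R)
    (beta gamma : R) (S : {set T}) : R :=
  \sum_(i in S) U i - \sum_(i in S) alpha i / RS rate S - (beta + gamma) / RS rate S.

(* Main.v *)
Require Import Defs.
From mathcomp Require Import all_boot all_order all_algebra.
From mathcomp Require Import ring lra.
Import Order.TTheory GRing.Theory Num.Theory.
Local Open Scope ring_scope.

Lemma setmin_le (R : realDomainType) (T : finType) (f : T -> R) (S : {set T}) i :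
  i \in S -> setmin f S <= f i.
Proof.
move=> Hi; rewrite /setmin; case: pickP => [i0 Hi0|/(_ i)/=]; last by rewrite Hi.
by rewrite (bigD1 i) //= ge_min lexx.
Qed.

Lemma setmax_ge (R : realDomainType) (T : finType) (f : T -> R) (S : {set T}) i :
  i \in S -> f i <= setmax f S.
Proof.
move=> Hi; rewrite /setmax; case: pickP => [i0 Hi0|/(_ i)/=]; last by rewrite Hi.
by rewrite (bigD1 i) //= le_max lexx.
Qed.

Lemma setmin_mem (R : realDomainType) (T : finType) (f : T -> R) (S : {set T}) :
  S != set0 -> exists2 i, i \in S & setmin f S = f i.
Proof.
case/set0Pn => j Hj; rewrite /setmin; case: pickP => [i0 Hi0|/(_ j)/=]; last by rewrite Hj.
apply: (big_ind (fun x => exists2 i, i \in S & x = f i)); first by exists i0.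
  move=> x y [i1 H1 ->] [i2 H2 ->].
  rewrite /Num.min /Num.Def.minr; case: ifP => _; [by exists i1 | by exists i2].
by move=> i Hi; exists i.
Qed.

Lemma setmax_mem (R : realDomainType) (T : finType) (f : T -> R) (S : {set T}) :
  S != set0 -> exists2 i, i \in S & setmax f S = f i.
Proof.
case/set0Pn => j Hj; rewrite /setmax; case: pickP => [i0 Hi0|/(_ j)/=]; last by rewrite Hj.
apply: (big_ind (fun x => exists2 i, i \in S & x = f i)); first by exists i0.
  move=> x y [i1 H1 ->] [i2 H2 ->].
  rewrite /Num.max /Num.Def.maxr; case: ifP => _; [by exists i2 | by exists i1].
by move=> i Hi; exists i.
Qed.

Lemma mvalueE (R : realFieldType) (T : finType) (U rate alpha : T -> R)
    (beta gamma : R) (S : {set T}) :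
  mvalue U rate alpha beta gamma S =
  \sum_(i in S) U i - (\sum_(i in S) alpha i + (beta + gamma)) / RS rate S.
Proof. rewrite /mvalue -mulr_suml; ring. Qed.

Theorem lemma2 (R : realFieldType) (T : finType)
    (U rate PRx : T -> R) (X a b w PTx : R)
    (hX : 0 < X) (ha : 0 < a) (hb : 0 < b) (hw : 0 < w) (hPTx : 0 < PTx)
    (hrate : forall i, 0 < rate i) (hPRx : forall i, 0 < PRx i)
    (P : {set {set T}}) (hP : partition P [set: T]) :
  let alpha := fun i => a * PRx i * X in
  let beta := b * PTx * X in
  let gamma := w * X in
  let alpha_min := setmin alpha [set: T] in
  let alpha_max := setmax alpha [set: T] in
  (forall Pj, Pj \in P ->
     setmax rate Pj / setmin rate Pj
       <= 2 * (alpha_min + beta + gamma) / (alpha_max * #|Pj|%:R + beta + gamma)) ->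
  forall (k : nat) (S : 'I_k -> {set T}),
    (forall i, S i != set0) ->
    (forall i j, i != j -> [disjoint S i & S j]) ->
    (exists2 Pj, Pj \in P & \bigcup_(i < k) S i \subset Pj) ->
    mvalue U rate alpha beta gamma (\bigcup_(i < k) S i)
      >= \sum_(i < k) mvalue U rate alpha beta gamma (S i).
Proof.
move=> alpha beta gamma amin amax hrat k S hne hdis [Pj hPj hsub].
have al0 : forall i, 0 < alpha i by move=> i; rewrite /alpha !mulr_gt0.
have c0 : 0 < beta + gamma by rewrite /beta /gamma addr_gt0 ?mulr_gt0.
case: k S hne hdis hsub => [|[|k]] S hne hdis hsub.
- rewrite !big_ord0 /mvalue /RS /setmin; case: pickP => [x|_]; first by rewrite inE.
  by rewrite !big_set0 !invr0 !mulr0 !subr0.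
- by rewrite !big_ord1.
set K := k.+2 in S hne hdis hsub *.
set Un := \bigcup_(i < K) S i in hsub *.
have UnP : Un != set0.
  case/set0Pn: (hne ord0) => x hx; apply/set0Pn; exists x.
  by apply/bigcupP; exists ord0.
have PjN : Pj != set0.
  case/set0Pn: UnP => x hx; apply/set0Pn; exists x; exact: (subsetP hsub).
set mn := setmin rate Pj; set Mx := setmax rate Pj.
have mn0 : 0 < mn by rewrite /mn; case: (@setmin_mem _ _ rate _ PjN) => i _ ->.
have Mx0 : 0 < Mx by rewrite /Mx; case: (@setmax_mem _ _ rate _ PjN) => i _ ->.
have hRU : mn <= RS rate Un.
  by case: (@setmin_mem _ _ rate _ UnP) => i hi; rewrite /RS => ->; apply: setmin_le; apply: (subsetP hsub).
have RU0 : 0 < RS rate Un by apply: lt_le_trans hRU.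
have hRi : forall i, 0 < RS rate (S i) /\ RS rate (S i) <= Mx.
  move=> i; case: (@setmin_mem _ _ rate _ (hne i)) => j hj; rewrite /RS => ->; split => //.
  apply: setmax_ge; apply: (subsetP hsub); apply/bigcupP; by exists i.
have hK : (K <= #|Un|)%N.
  rewrite -sum1_card partition_disjoint_bigcup //.
  apply: (@leq_trans (\sum_(i < K) 1)%N); first by rewrite sum1_card card_ord.
  apply: leq_sum => i _; rewrite sum1_card card_gt0; exact: hne.
have hKP : (K <= #|Pj|)%N by apply: leq_trans hK (subset_leq_card hsub).
set p : R := #|Pj|%:R.
have hp : 2 <= p by rewrite /p ler_nat; apply: leq_trans hKP.
have hK2 : 2 <= K%:R :> R by rewrite ler_nat.
case/set0Pn: (UnP) => x0 _.
have hT : [set: T] != set0 by apply/set0Pn; exists x0; rewrite inE.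
have hamin : 0 < amin by rewrite /amin; case: (@setmin_mem _ _ alpha [set: T] hT) => i _ ->.
have hamm : amin <= amax.
  apply: le_trans (_ : alpha x0 <= _); [exact: setmin_le | exact: setmax_ge].
rewrite mvalueE (eq_bigr _ (fun i _ => @mvalueE _ _ U rate alpha beta gamma (S i))).
rewrite sumrB.
have hA : \sum_(x in Un) alpha x <= amax * p.
  apply: le_trans (_ : \sum_(x in Un) amax <= _).
    by apply: ler_sum => x _; apply: setmax_ge; rewrite inE.
  rewrite sumr_const -mulr_natr; apply: ler_wpM2l; first by apply: ltW; apply: lt_le_trans hamm.
  by rewrite /p ler_nat subset_leq_card.
rewrite !partition_disjoint_bigcup // in hA *.
rewrite lerD2l lerN2.
set A := \sum_(i < K) \sum_(x in S i) alpha x in hA *.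
have A0 : 0 <= A by apply: sumr_ge0 => i _; apply: sumr_ge0 => l _; exact: ltW.
have key1 : (A + (beta + gamma) *+ K) / Mx <= \sum_(i < K) (\sum_(x in S i) alpha x + (beta + gamma)) / RS rate (S i).
  apply: le_trans (_ : \sum_(i<K) (\sum_(x in S i) alpha x + (beta + gamma)) / Mx <= _).
    by rewrite -mulr_suml big_split /= sumr_const card_ord.
  apply: ler_sum => i _; case: (hRi i) => h1 h2.
  apply: ler_wpM2l; first by apply: addr_ge0; [apply: sumr_ge0 => l _; exact: ltW | exact: ltW].
  by rewrite lef_pV2 ?posrE.
apply: le_trans key1.
apply: le_trans (_ : (A + (beta + gamma)) / mn <= _).
  apply: ler_wpM2l; first by apply: addr_ge0 => //; exact: ltW.
  by rewrite lef_pV2 ?posrE.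
have h := hrat Pj hPj; rewrite -/Mx -/mn -/p in h.
have M0 : 0 < amax * p + beta + gamma.
  have : 0 < amax * p by apply: mulr_gt0; lra.
  lra.
rewrite ler_pdivrMr // mulrAC ler_pdivlMr // in h.
rewrite ler_pdivrMr // mulrAC ler_pdivlMr // -mulr_natr.
have t0 : 0 <= amax * (p - 2) by apply: mulr_ge0; lra.
have t1 : 0 <= A * (amax * p - 2 * amin) by apply: mulr_ge0; lra.
have t2 : 0 <= (beta + gamma) * (2 * amax * p - 2 * amin - A) by apply: mulr_ge0; lra.
have q : 2 * (amin + beta + gamma) * (A + (beta + gamma)) <= (amax * p + beta + gamma) * (A + 2 * (beta + gamma)) by lra.
rewrite -(@ler_pM2r _ (amax * p + beta + gamma)) //.
have h1 := ler_wpM2r (addr_ge0 A0 (ltW c0)) h.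
have h2 := ler_wpM2r (ltW mn0) q.
have h3 : 0 <= mn * (amax * p + beta + gamma) * (beta + gamma) * (K%:R - 2).
  by apply: mulr_ge0; [apply: mulr_ge0; [apply: mulr_ge0|]|]; lra.
lra.
Qed.
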